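(* Let $\mathbf{A}$ be an algebra with an $m$-ary, $p$-pointed, $k$-cube term, with at least one constant symbol appearing in the cube identities (so $p\geq 1$). If $\mathbf{A}^{p+k-1}$ is finitely generated, then all finite powers of $\mathbf{A}$ are finitely generated and $d_{\mathbf{A}}(n)$ is bounded above by a polynomial of degree at most $\log_w(m)$, where $w = 2k/(2k-1)$ (i.e., $d_{\mathbf{A}}(n)\in O(n^{\log_w(m)})$).
   Context: An algebra $\mathbf{A}$ has an $m$-ary, $p$-pointed, $k$-cube term if there is a term $F(x_1,\dots,x_m)$ in the language of $\mathbf{A}$ and a $k\times m$ matrix $M=[y_{i,j}]$ whose entries are variables and constant symbols (nullary operation symbols of the language), exactly $p$ distinct constant symbols occurring, such that every column of $M$ contains an entry different from the variable $x$, and the identities $F(y_{i,1},\dots,y_{i,m})\approx x$ (the cube identities), $i=1,\dots,k$, hold in $\mathbf{A}$. $d_{\mathbf{A}}(n)$ is the least size of a generating set of $\mathbf{A}^n$. *)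

(* Defs.v *)
From mathcomp Require Import ssreflect ssrfun ssrbool eqtype ssrnat fintype.
From Stdlib Require Import Reals List.

Set Implicit Arguments.
Unset Strict Implicit.
Unset Printing Implicit Defensive.

Record signature := Signature { sym : Type; ar : sym -> nat }.

Record algebra (S : signature) := Algebra {
  carrier : Type;
  op : forall f : sym S, ('I_(ar f) -> carrier) -> carrier }.

Arguments op {S} a f _.

Inductive term (S : signature) (X : Type) : Type :=
  | Var : X -> term S X
  | App : forall f : sym S, ('I_(ar f) -> term S X) -> term S X.

Arguments Var {S X} _.
Arguments App {S X} f _.

Fixpoint eval (S : signature) (A : algebra S) (X : Type)
  (v : X -> carrier A) (t : term S X) : carrier A :=
  match t with
  | Var x => v x
  | App f ts => op A f (fun i => @eval S A X v (ts i))
  end.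

Arguments eval {S} A {X} v t.

Definition pow_alg (S : signature) (A : algebra S) (n : nat) : algebra S :=
  {| carrier := 'I_n -> carrier A;
     op := fun f args i => op A f (fun j => args j i) |}.

Definition generated_by (S : signature) (A : algebra S) (s : nat)
  (g : 'I_s -> carrier A) : Prop :=
  forall a : carrier A, exists t : term S 'I_s, eval A g t = a.

Arguments generated_by {S} A {s} g.

Definition finitely_generated (S : signature) (A : algebra S) : Prop :=
  exists (s : nat) (g : 'I_s -> carrier A), generated_by A g.

(* Entries of the cube-identity matrix: variables (indexed by nat; the
   distinguished variable x is variable 0) or constant symbols. *)
Inductive entry (S : signature) : Type :=
  | EVar : nat -> entry S
  | EConst : {c : sym S | ar c = 0} -> entry S.

Arguments EVar {S} _.
Arguments EConst {S} _.

Definition nullary_args (T : Type) (n : nat) (H : n = 0) : 'I_n -> T.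
Proof. move=> [i Hi]; exfalso; move: Hi; rewrite H. by []. Defined.

Definition entry_val (S : signature) (A : algebra S) (v : nat -> carrier A)
  (e : entry S) : carrier A :=
  match e with
  | EVar n => v n
  | EConst c => op A (proj1_sig c) (@nullary_args (carrier A) _ (proj2_sig c))
  end.

Arguments entry_val {S} A v e.

Definition p_pointed (S : signature) (k m : nat) (M : 'I_k -> 'I_m -> entry S)
  (p : nat) : Prop :=
  exists l : list (sym S),
    NoDup l /\ length l = p /\
    forall c : sym S, In c l <-> exists i j (H : ar c = 0), M i j = EConst (exist _ c H).

(* The cube identity
   F(y_{i,1},...,y_{i,m}) ~ x holding in A means: for every assignment v of
   the variables, the value of F at the values of the entries is v 0 (= x). *)
Definition has_cube_term (S : signature) (A : algebra S) (m p k : nat) : Prop :=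
  exists (F : term S 'I_m) (M : 'I_k -> 'I_m -> entry S),
    (forall j : 'I_m, exists i : 'I_k, M i j <> EVar 0) /\
    p_pointed M p /\
    (forall (i : 'I_k) (v : nat -> carrier A),
        eval A (fun j => entry_val A v (M i j)) F = v 0).

(* Main.v *)
Require Import Defs.
From mathcomp Require Import ssreflect ssrfun ssrbool eqtype ssrnat fintype.
From Stdlib Require Import Reals.
From mathcomp Require Import seq div choice tuple finset.
From Stdlib Require Import FunctionalExtensionality ClassicalEpsilon Lra.
From mathcomp Require Import zify.

Set Implicit Arguments.
Unset Strict Implicit.
Unset Printing Implicit Defensive.


Fixpoint tsubst (S : signature) (X Y : Type) (sg : X -> term S Y) (t : term S X)
  : term S Y :=
  match t with
  | Var x => sg x
  | App f ts => App f (fun i => tsubst sg (ts i))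
  end.

Lemma eval_tsubst (S : signature) (A : algebra S) (X Y : Type)
  (sg : X -> term S Y) (v : Y -> carrier A) (t : term S X) :
  eval A v (tsubst sg t) = eval A (fun x => eval A v (sg x)) t.
Proof.
elim: t => [x|f ts IH] //=.
by congr (op A f); apply: functional_extensionality => i; apply: IH.
Qed.

Definition tmap (S : signature) (X Y : Type) (h : X -> Y) (t : term S X) :=
  tsubst (fun x => @Var S Y (h x)) t.

Lemma eval_tmap (S : signature) (A : algebra S) (X Y : Type)
  (h : X -> Y) (v : Y -> carrier A) (t : term S X) :
  eval A v (tmap h t) = eval A (fun x => v (h x)) t.
Proof. by rewrite /tmap eval_tsubst. Qed.

Lemma pow_eval (S : signature) (A : algebra S) (N : nat) (X : Type)
  (g : X -> carrier (pow_alg A N)) (t : term S X) (c : 'I_N) :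
  eval (pow_alg A N) g t c = eval A (fun x => g x c) t.
Proof.
elim: t => [x|f ts IH] //=.
by congr (op A f); apply: functional_extensionality => i; apply: IH.
Qed.

Lemma pow_eval_comp (S : signature) (A : algebra S) (N N' : nat) (X : Type)
  (g : X -> carrier (pow_alg A N)) (sg : 'I_N' -> 'I_N) (t : term S X) :
  eval (pow_alg A N') (fun x => (g x : 'I_N -> carrier A) \o sg) t
  = (eval (pow_alg A N) g t : 'I_N -> carrier A) \o sg.
Proof.
apply: functional_extensionality => c /=.
by rewrite !pow_eval.
Qed.

Definition isx (S : signature) (e : entry S) : bool :=
  match e with EVar 0 => true | _ => false end.

Section Main.
Variables (S : signature) (A : algebra S) (m p k : nat).
Variables (F : term S 'I_m) (M : 'I_k -> 'I_m -> entry S).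
Hypothesis Hcube : forall i v, eval A (fun j => entry_val A v (M i j)) F = v 0.
Hypothesis Hcol : forall j, exists i, ~~ isx (M i j).
Variables (cv : 'I_p -> carrier A) (l0 : 'I_p) (labE : 'I_k -> 'I_m -> 'I_p).
Hypothesis HlabE : forall i j v, ~~ isx (M i j) ->
  (forall n, n != 0 -> v n = cv l0) -> entry_val A v (M i j) = cv (labE i j).
Variables (r0 : 'I_k) (j0 : 'I_m).
Variables (s0 : nat) (g0 : 'I_s0 -> carrier (pow_alg A (p + k - 1))).
Hypothesis Hg0 : generated_by (pow_alg A (p + k - 1)) g0.
Variable d0 : 'I_(p + k - 1).

Local Notation d := (p + k - 1).

Definition ext f (u : 'I_f -> carrier A) : 'I_(f+p) -> carrier A :=
  fun t => match fintype.split t with inl a => u a | inr b => cv b end.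

Definition gens D f (h : D.-tuple 'I_m -> 'I_(f+p) -> 'I_d) :
  (D.-tuple 'I_m * 'I_s0) -> carrier (pow_alg A (f+p)) :=
  fun x => (g0 x.2 : 'I_d -> carrier A) \o h x.1.

Definition claim D f :=
  {h : D.-tuple 'I_m -> 'I_(f+p) -> 'I_d |
     forall u, exists t, eval (pow_alg A (f+p)) (gens h) t = ext u}.

Lemma base_case D f : f < k -> claim D f.
Proof.
move=> fk.
have kp : 0 < k by apply: leq_ltn_trans fk.
have pp : 0 < p := leq_ltn_trans (leq0n _) (ltn_ord l0).
pose tau0 : 'I_(f+p) -> 'I_d := fun t => match fintype.split t with
   inl a => insubd d0 (nat_of_ord a) | inr b => insubd d0 (k - 1 + b) end.
exists (fun _ => tau0) => u.
pose x : 'I_d -> carrier A := fun c =>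
  if nat_of_ord c < k - 1 then
    (match (insub (nat_of_ord c) : option 'I_f) with Some a => u a | None => cv l0 end)
  else cv (insubd l0 (c - (k - 1))).
have [t Ht] := Hg0 x.
exists (tmap (fun l => ([tuple j0 | _ < D], l)) t).
rewrite eval_tmap /gens /=.
rewrite (pow_eval_comp g0 tau0 t) Ht.
apply: functional_extensionality => c /=.
rewrite /x /tau0 /ext.
case: splitP => [a Ha|b Hb].
- have ad : a < d by have := ltn_ord a; lia.
  have E : nat_of_ord (insubd d0 (nat_of_ord a)) = a by rewrite val_insubd ad.
  rewrite E.
  have -> : a < k - 1 by have := ltn_ord a; lia.
  by rewrite (valK a).
- have bd : k - 1 + b < d by have := ltn_ord b; lia.
  have E : nat_of_ord (insubd d0 (k - 1 + b)) = k - 1 + b by rewrite val_insubd bd.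
  rewrite E.
  have -> : (k - 1 + b < k - 1) = false by lia.
  congr cv; apply: val_inj; rewrite val_insubd /=.
  have -> : k - 1 + b - (k - 1) = b by lia.
  by rewrite ltn_ord.
Qed.


Definition blk f (t : 'I_f) : 'I_k := insubd r0 (minn (t %/ (f %/ k)) (k - 1)).

Definition Tset f j : {set 'I_f} := [set t | isx (M (blk t) j)].

Definition pi f j : 'I_(f+p) -> 'I_(#|Tset f j| + p) := fun t =>
  match fintype.split t with
  | inl a => if isx (M (blk a) j)
             then insubd (rshift _ l0) (index a (enum (Tset f j)))
             else rshift _ (labE (blk a) j)
  | inr b => rshift _ (if isx (M r0 j) then b else labE r0 j)
  end.
Arguments pi {f} j t.

Definition usub f j (u : 'I_f -> carrier A) : 'I_#|Tset f j| -> carrier A :=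
  fun r => u (enum_val r).
Arguments usub {f} j u.

Lemma pi_x f j (u : 'I_f -> carrier A) (a : 'I_f) :
  a \in Tset f j ->
  ext (usub j u) (insubd (rshift _ l0) (index a (enum (Tset f j)))) = u a.
Proof.
move=> aT.
have ilt : index a (enum (Tset f j)) < #|Tset f j|.
  by rewrite cardE index_mem mem_enum.
rewrite /ext; case: splitP => [r Hr|b Hb].
- rewrite /usub (enum_val_nth a) -Hr val_insubd.
  have -> : index a (enum (Tset f j)) < #|Tset f j| + p by apply: ltn_addr.
  by rewrite nth_index // mem_enum.
- exfalso; move: Hb; rewrite val_insubd.
  have -> : index a (enum (Tset f j)) < #|Tset f j| + p by apply: ltn_addr.
  move=> Hb; move: ilt; rewrite Hb; lia.
Qed.

Lemma ext_rshift f (u : 'I_f -> carrier A) (b : 'I_p) : ext u (rshift f b) = cv b.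
Proof.
rewrite /ext; case: splitP => [r Hr|b' Hb].
- by exfalso; move: (ltn_ord r); rewrite -Hr /=; lia.
- by congr cv; apply: val_inj; move: Hb => /= /eqP; rewrite eqn_add2l => /eqP.
Qed.

Lemma pi_correct f (u : 'I_f -> carrier A) (t : 'I_(f+p)) :
  eval A (fun j => ext (usub j u) (pi j t)) F = ext u t.
Proof.
rewrite {2}/ext /pi; case: splitP => [a Ha|b Hb].
- pose v : nat -> carrier A := fun n => if n == 0 then u a else cv l0.
  rewrite -[u a]/(v 0) -(Hcube (blk a) v); congr (eval A _ F); apply: functional_extensionality => j.
  case Hx: (isx (M (blk a) j)).
  + rewrite pi_x; last by rewrite inE Hx.
    by move: Hx; case: (M (blk a) j) => // -[|n] //.
  + rewrite ext_rshift HlabE ?Hx // => n /negbTE; rewrite /v => ->; done.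
- pose v : nat -> carrier A := fun n => if n == 0 then cv b else cv l0.
  rewrite -[cv b]/(v 0) -(Hcube r0 v); congr (eval A _ F); apply: functional_extensionality => j.
  rewrite ext_rshift.
  case Hx: (isx (M r0 j)).
  + by move: Hx; case: (M r0 j) => // -[|n] //.
  + rewrite HlabE ?Hx // => n /negbTE; rewrite /v => ->; done.
Qed.

Lemma card_T f j : k <= f -> #|Tset f j| * (2 * k) <= f * (2 * k - 1).
Proof.
move=> kf.
have kp : 0 < k := leq_ltn_trans (leq0n _) (ltn_ord r0).
set q := f %/ k.
have qp : 0 < q by rewrite divn_gt0.
have qk : q * k <= f by apply: leq_trunc_div.
have fq : f < q.+1 * k by apply: ltn_ceil.
have [i0 Hi0] := Hcol j.
have t0 : 'I_f by exists 0; lia.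
pose B := [set t : 'I_f | blk t == i0].
have sub1 : Tset f j \subset ~: B.
  apply/subsetP => t; rewrite !inE => Ht; apply/negP => /eqP Hb.
  by move: Hi0; rewrite -Hb Ht.
pose emb (a : 'I_q) : 'I_f := insubd t0 (i0 * q + a).
have embv a : nat_of_ord (emb a) = i0 * q + a.
  rewrite val_insubd; have := ltn_ord a; have := ltn_ord i0.
  move=> h1 h2; have h3 : i0.+1 * q <= k * q by rewrite leq_mul2r h1 orbT.
  have -> : i0 * q + a < f by rewrite mulSn in h3; lia.
  done.
have embinj : injective emb.
  by move=> a b /(congr1 (@nat_of_ord f)); rewrite !embv => /eqP; rewrite eqn_add2l => /eqP /val_inj.
have sub2 : [set emb a | a in [set: 'I_q]] \subset B.
  apply/subsetP => t /imsetP [a _ ->]; rewrite inE; apply/eqP/val_inj.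
  rewrite /blk val_insubd embv divnMDl // (divn_small (ltn_ord a)) addn0.
  have h := ltn_ord i0.
  have -> : minn i0 (k - 1) = i0 by apply/minn_idPl; lia.
  by rewrite h.
have cB : q <= #|B|.
  by move: (subset_leq_card sub2); rewrite card_imset // cardsT card_ord.
have cT := subset_leq_card sub1.
have cC := cardsC B; rewrite card_ord in cC.
move: cT cC cB; set x1 := #|~: B|; set y1 := #|B|; set z1 := #|Tset f j| => cT cC cB. have h1 : z1 + q <= f by lia.
have h2 : k <= q * k by rewrite leq_pmull.
have h3 : f <= 2 * (q * k) by lia.
have h4 : (z1 + q) * (2 * k) <= f * (2 * k) by rewrite leq_mul2r h1 orbT.
have -> : f * (2 * k - 1) = f * (2 * k) - f by rewrite mulnBr muln1.
rewrite mulnDl in h4.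
have h5 : f <= q * (2 * k) by rewrite mulnCA.
lia.
Qed.

Lemma claim_all D : forall f,
  f * expn (2 * k - 1) D < k * expn (2 * k) D -> claim D f.
Proof.
elim: D => [|D IH] f Hf.
  by apply: base_case; move: Hf; rewrite !muln1.
case: (ltnP f k) => fk; first exact: base_case.
have kp : 0 < k := leq_ltn_trans (leq0n _) (ltn_ord r0).
have cond j : #|Tset f j| * expn (2 * k - 1) D < k * expn (2 * k) D.
  have h := card_T j fk.
  rewrite -(ltn_pmul2r (_ : 0 < 2 * k)); last by lia.
  apply: leq_ltn_trans (_ : f * expn (2 * k - 1) D.+1 < _).
    rewrite expnS mulnAC [f * _]mulnA.
    by rewrite leq_mul2r h orbT.
  by apply: leq_trans Hf _; rewrite expnS mulnCA mulnC.
pose hs j := proj1_sig (IH _ (cond j)).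
pose hc j x : 'I_(f+p) -> 'I_d := hs j x \o pi j.
exists (fun tu => hc (thead tu) (behead_tuple tu)) => u.
have Hts j : exists t, eval (pow_alg A (#|Tset f j| + p)) (gens (hs j)) t
                       = ext (usub j u).
  exact: (proj2_sig (IH _ (cond j)) (usub j u)).
pose ts j := proj1_sig (constructive_indefinite_description _ (Hts j)).
have Hts' j : eval (pow_alg A (#|Tset f j| + p)) (gens (hs j)) (ts j)
                = ext (usub j u).
  exact: (proj2_sig (constructive_indefinite_description _ (Hts j))).
exists (tsubst (fun j => tmap (fun x : D.-tuple 'I_m * 'I_s0 => ([tuple of j :: x.1], x.2)) (ts j)) F).
apply: functional_extensionality => c.
rewrite eval_tsubst pow_eval -(pi_correct u c).
congr (eval A _ F); apply: functional_extensionality => j.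
rewrite eval_tmap.
have E : (fun x : D.-tuple 'I_m * 'I_s0 => gens (fun tu => hc (thead tu) (behead_tuple tu))
                     ([tuple of j :: x.1], x.2))
         = (fun x : D.-tuple 'I_m * 'I_s0 => (gens (hs j) x : 'I_(_ + p) -> carrier A) \o pi j).
  apply: functional_extensionality => x.
  rewrite /gens /hc theadE /=.
  have -> : behead_tuple [tuple of j :: x.1] = x.1 by apply: val_inj.
  by [].
by rewrite E (pow_eval_comp (gens (hs j)) (pi j) (ts j)) Hts'.
Qed.

Lemma gen_n n D : n * expn (2 * k - 1) D < k * expn (2 * k) D ->
  exists g : 'I_(expn m D * s0) -> carrier (pow_alg A n),
    generated_by (pow_alg A n) g.
Proof.
move=> Hn.
have [h Hh] := claim_all Hn.
pose X := (D.-tuple 'I_m * 'I_s0)%type.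
have HN : #|{: X}| = expn m D * s0 by rewrite card_prod card_tuple !card_ord.
pose g (i : 'I_(expn m D * s0)) : carrier (pow_alg A n) :=
  (gens h (enum_val (cast_ord (esym HN) i)) : 'I_(n+p) -> carrier A) \o lshift p.
exists g => a.
have [t Ht] := Hh a.
exists (tmap (fun x => cast_ord HN (enum_rank x)) t).
rewrite eval_tmap.
have E : (fun x => g (cast_ord HN (enum_rank x)))
   = (fun x => (gens h x : 'I_(n+p) -> carrier A) \o lshift p).
  apply: functional_extensionality => x.
  by rewrite /g cast_ordK enum_rankK.
rewrite E (pow_eval_comp (gens h) (lshift p) t) Ht.
apply: functional_extensionality => c /=.
rewrite /ext; case: splitP => [r Hr|b Hb].
- by congr a; apply: val_inj; move: Hr => /= ->.
- by exfalso; move: (ltn_ord c) Hb => /= ? ?; lia.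
Qed.

End Main.

Unset Implicit Arguments.

Lemma expn_pow a b : expn a b = Nat.pow a b.
Proof. elim: b => [|b IH] //. by rewrite expnS IH /= . Qed.

Lemma real_bound (m k n D : nat) : (1 <= m)%nat -> (1 <= k)%nat ->
  (expn (2 * k) D <= n * expn (2 * k - 1) D)%nat ->
  (INR (expn m D) <= Rpower (INR n)
     (ln (INR m) / ln ((2 * INR k) / (2 * INR k - 1))))%R.
Proof.
move=> m1 k1 H.
have km : (1 <= INR k)%R by apply: (le_INR 1); apply/leP.
have mm : (1 <= INR m)%R by apply: (le_INR 1); apply/leP.
set w := (2 * INR k / (2 * INR k - 1))%R.
have wpos : (1 < w)%R.
  rewrite /w; apply: (Rmult_lt_reg_r (2 * INR k - 1)); first lra.
  rewrite /Rdiv Rmult_assoc Rinv_l; lra.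
have lw : (0 < ln w)%R by rewrite -ln_1; apply: ln_increasing; lra.
have HR : ((2 * INR k) ^ D <= INR n * (2 * INR k - 1) ^ D)%R.
  have := le_INR _ _ (elimT leP H).
  rewrite !expn_pow -!multE -!minusE mult_INR !pow_INR mult_INR minus_INR; last by lia.
  by rewrite mult_INR (_ : INR 2 = 2%R) // (_ : INR 1 = 1%R).
have wD : (w ^ D <= INR n)%R.
  have p0 : (0 < (2 * INR k - 1) ^ D)%R by apply: pow_lt; lra.
  rewrite /w /Rdiv Rpow_mult_distr pow_inv.
  apply: (Rmult_le_reg_r ((2 * INR k - 1) ^ D)) => //.
  rewrite Rmult_assoc Rinv_l; lra.
have w0 : (0 < w ^ D)%R by apply: pow_lt; lra.
have e0 : (0 <= ln (INR m) / ln w)%R.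
  apply: Rmult_le_pos; last by apply: Rlt_le; apply: Rinv_0_lt_compat.
  case: (Rle_lt_or_eq_dec _ _ mm) => [h|<-]; last by rewrite ln_1; lra.
  by rewrite -ln_1; apply: Rlt_le; apply: ln_increasing; lra.
rewrite expn_pow pow_INR -Rpower_pow; last lra.
apply: Rle_trans (Rle_Rpower_l _ _ _ e0 (conj w0 wD)).
rewrite -Rpower_pow; last lra.
rewrite Rpower_mult /Rpower.
apply: Req_le; congr exp; field; lra.
Qed.

Lemma bernoulli a D : expn a D * (a + D) <= expn (a.+1) D * a.
Proof.
elim: D => [|D IH]; first by rewrite !expn0 !mul1n addn0.
rewrite !expnS.
have h : expn a D * (a + D) * (a.+1) <= expn a.+1 D * a * a.+1.
  by rewrite leq_mul2r IH orbT.
nia.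
Qed.

Lemma exists_D n k : 0 < k -> exists D, n * expn (2 * k - 1) D < k * expn (2 * k) D.
Proof.
move=> k0.
exists (n * (2 * k - 1)).
have := bernoulli (2 * k - 1) (n * (2 * k - 1)).
have -> : (2 * k - 1).+1 = 2 * k by lia.
set a := 2 * k - 1; set E := expn a _; set E2 := expn (2 * k) _.
have a1 : 0 < a by rewrite /a; lia.
have E1 : 0 < E by rewrite /E expn_gt0 a1.
move=> h.
have h2 : E * (n + 1) <= E2.
  have : E * (n + 1) * a <= E2 * a.
    by rewrite -mulnA mulnDl mul1n addnC.
  by rewrite leq_mul2r => /orP [/eqP a0|//]; move: a1; rewrite a0.
nia.
Qed.

Theorem theorem5p5 (S : signature) (A : algebra S) (m p k : nat) :
  has_cube_term A m p k ->
  (1 <= p)%nat ->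
  finitely_generated (pow_alg A (p + k - 1)) ->
  (forall n : nat, finitely_generated (pow_alg A n)) /\
  exists (C : R) (N : nat), forall n : nat, (N <= n)%nat ->
    exists (s : nat) (g : 'I_s -> carrier (pow_alg A n)),
      generated_by (pow_alg A n) g /\
      (INR s <= C * Rpower (INR n)
         (ln (INR m) / ln ((2 * INR k) / (2 * INR k - 1))))%R.
Proof.
move=> [F [M [Hcol0 [[l [Hnd [Hlen Hin]]] Hc]]]] p1 [s0 [g0 Hg0]].
have [c0 Hc0] : exists c, List.In c l.
  by case: l Hlen {Hnd Hin} => [/= Hl|c l' _]; [move: p1; rewrite -Hl | exists c; left].
have [i1 [j1 [H1 HM1]]] := proj1 (Hin c0) Hc0.
have a0 : inhabited (carrier A) := inhabits (op A c0 (@nullary_args (carrier A) _ H1)).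
pose l0 : 'I_p := Ordinal p1.
pose lab (e : {c | ar c = 0}) : 'I_p :=
  epsilon (inhabits l0) (fun i : 'I_p => List.nth i l (proj1_sig e) = proj1_sig e).
have Hlab e : List.In (proj1_sig e) l -> List.nth (lab e) l (proj1_sig e) = proj1_sig e.
  move=> He.
  apply: (epsilon_spec (inhabits l0) (fun i : 'I_p => List.nth i l (proj1_sig e) = proj1_sig e)).
  have [n [Hn Hnth]] := List.In_nth l _ (proj1_sig e) He.
  have Hn' : n < p by rewrite -Hlen; apply/ltP.
  by exists (Ordinal Hn').
pose valE (e : {c | ar c = 0}) := op A (proj1_sig e) (@nullary_args (carrier A) _ (proj2_sig e)).
have valE_eq e1 e2 : proj1_sig e1 = proj1_sig e2 -> valE e1 = valE e2.
  case: e1 => c1 H1'; case: e2 => c2 H2' /= E; subst c2.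
  by rewrite /valE /= (eq_irrelevance H1' H2').
pose occ e := exists i j, M i j = EConst e.
have occ_in e : occ e -> List.In (proj1_sig e) l.
  by case: e => c H [i [j E]]; apply/(Hin c); exists i, j, H.
pose cv (i : 'I_p) := epsilon a0 (fun a => exists e, occ e /\ lab e = i /\ a = valE e).
have Hcv e : occ e -> cv (lab e) = valE e.
  move=> oe.
  have := epsilon_spec a0 (fun a => exists e', occ e' /\ lab e' = lab e /\ a = valE e')
    (ex_intro _ (valE e) (ex_intro _ e (conj oe (conj erefl erefl)))).
  rewrite -/(cv (lab e)).
  move=> [e' [oe' [Hl ->]]]; apply: valE_eq.
  have h1 := Hlab e (occ_in e oe); have h2 := Hlab e' (occ_in e' oe').
  rewrite Hl in h2.
  rewrite -h1 -h2; apply: List.nth_indep; rewrite Hlen; apply/ltP; exact: ltn_ord.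
pose labE i j := match M i j with EConst e => lab e | _ => l0 end.
have HlabE : forall i j (v : nat -> carrier A), ~~ isx (M i j) ->
    (forall n, n != 0 -> v n = cv l0) -> entry_val A v (M i j) = cv (labE i j).
  move=> i j v; rewrite /labE; case E: (M i j) => [n|e] /= Hx Hv.
  - by apply: Hv; move: Hx; clear E; case: n.
  - by symmetry; apply: Hcv; exists i, j.
have Hcol : forall j, exists i, ~~ isx (M i j).
  move=> j; have [i Hi] := Hcol0 j; exists i; move: Hi.
  by case: (M i j) => // -[|n] //.
have k1 : 0 < k := leq_ltn_trans (leq0n _) (ltn_ord i1).
have m1 : 0 < m := leq_ltn_trans (leq0n _) (ltn_ord j1).
have d0p : 0 < p + k - 1 by lia.
pose d0 : 'I_(p + k - 1) := Ordinal d0p.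
have G n D H := gen_n Hc Hcol HlabE i1 j1 Hg0 d0 (n:=n) (D:=D) H.
split.
  move=> n; have [D HD] := exists_D n k k1; have [g Hg] := G n D HD.
  by exists (expn m D * s0), g.
exists (INR (m * s0)), 1 => n n1.
have ex := exists_D n k k1.
case: (ex_minnP ex) => D HD Hmin.
have [g Hg] := G n D HD.
exists (expn m D * s0), g; split=> //.
have [D0 [HD0 Hle]] : exists D0, (INR (expn m D0) <= Rpower (INR n)
         (ln (INR m) / ln ((2 * INR k) / (2 * INR k - 1))))%R /\
         expn m D * s0 <= expn m D0 * (m * s0).
  case: D HD Hmin {g Hg} => [|D'] HD Hmin.
    exists 0; split.
      apply: real_bound => //; rewrite !expn0 !muln1; lia.
    by rewrite expn0 !mul1n leq_pmull.
  exists D'; split.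
    apply: real_bound => //.
    have : ~~ (n * expn (2 * k - 1) D' < k * expn (2 * k) D').
      by apply/negP => /Hmin; rewrite ltnn.
    rewrite -leqNgt => h; apply: leq_trans h.
    by rewrite leq_pmull.
  by rewrite expnS mulnCA mulnA.
apply: Rle_trans (_ : INR (expn m D0 * (m * s0)) <= _)%R.
  by apply: le_INR; apply/leP.
rewrite -multE mult_INR Rmult_comm.
apply: Rmult_le_compat_l => //; exact: pos_INR.
Qed.
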